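(* Let $M$ be a structure and let $(\bar a_i,\bar b_i : i\in\mathbb Q)$ be a family of tuples in $M$ (all $\bar a_i$ of the same length, all $\bar b_i$ of the same length) which, viewed as indexed by $G_*$, is $L^*$-indiscernible. Then either the two sequences $(\bar a_i : i\in\mathbb Q)$ and $(\bar b_i : i\in\mathbb Q)$ are mutually indiscernible, or there is a formula $\phi(\bar x;\bar y)$ with parameters from $\{\bar a_i,\bar b_i : i\in\mathbb Q\}$, where $|\bar x|=|\bar a_i|$ and $|\bar y|=|\bar b_i|$, which has the independence property.
   Context: Let $L^*=\{U,\le_U,V,\le_V,R\}$ with $U,V$ unary and $\le_U,\le_V,R$ binary. An ordered bipartite graph is an $L^*$-structure $G$ in which $U,V$ partition the domain, $\le_U\subseteq U^2$ and $\le_V\subseteq V^2$ are linear orders on $U(G)$ and $V(G)$ respectively, and $R\subseteq U\times V$. $G_*$ denotes the random ordered bipartite graph, i.e. the countable Fraïssé limit of the class of finite ordered bipartite graphs; $(U(G_* ),\le_U)$ and $(V(G_* ),\le_V)$ are countable dense linear orders without endpoints, and we fix identifications of each with $(\mathbb Q,\le)$. A family $(\bar a_i,\bar b_i : i\in\mathbb Q)$ is viewed as indexed by $G_*$ by sending $i\in U(G_* )\cong\mathbb Q$ to $\bar a_i$ and $j\in V(G_* )\cong\mathbb Q$ to $\bar b_j$. For an $L^*$-structure $I$, a family $(\bar c_t : t\in I)$ in an $L$-structure $M$ is $L^*$-indiscernible if whenever $(t_1,\dots,t_n)$ and $(s_1,\dots,s_n)$ have the same quantifier-free $L^*$-type in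 $I$, the tuples $(\bar c_{t_1},\dots,\bar c_{t_n})$ and $(\bar c_{s_1},\dots,\bar c_{s_n})$ have the same $L$-type in $M$. Two sequences $(\bar a_i:i\in\mathbb Q)$ and $(\bar b_i:i\in\mathbb Q)$ are mutually indiscernible if each is an order-indiscernible sequence over the set of parameters appearing in the other. A formula $\phi(\bar x;\bar y)$ (possibly with parameters from $M$) has the independence property if in some elementary extension of $M$ there are $(\bar c_i:i\in\omega)$ and $(\bar d_S:S\subseteq\omega)$ with $\models\phi(\bar c_i;\bar d_S)\iff i\in S$. *)

(* Defs.v *)
From HB Require Import structures.
From mathcomp Require Import all_boot all_order all_algebra.
Set Implicit Arguments. Unset Strict Implicit. Unset Printing Implicit Defensive.
Import Order.TTheory GRing.Theory Num.Theory.
Local Open Scope ring_scope.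

Record language := Language {
  Fsym : Type; far : Fsym -> nat;
  Rsym : Type; rar : Rsym -> nat }.

Inductive term (L : language) : Type :=
  | Var : nat -> term L
  | App : forall f : Fsym L, ('I_(far f) -> term L) -> term L.

Inductive formula (L : language) : Type :=
  | Eqf : term L -> term L -> formula L
  | Relf : forall r : Rsym L, ('I_(rar r) -> term L) -> formula L
  | Negf : formula L -> formula L
  | Andf : formula L -> formula L -> formula L
  | Exf : nat -> formula L -> formula L.

Record structure (L : language) := Structure {
  carrier :> Type;
  fint : forall f : Fsym L, ('I_(far f) -> carrier) -> carrier;
  rint : forall r : Rsym L, ('I_(rar r) -> carrier) -> Prop }.

Definition upd {M : Type} (v : nat -> M) (n : nat) (m : M) : nat -> M :=
  fun k => if k == n then m else v k.

Fixpoint teval (L : language) (M : structure L) (v : nat -> M) (t : term L) : M :=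
  match t with
  | Var n => v n
  | App f ts => @fint L M f (fun i => teval v (ts i))
  end.

Fixpoint sat (L : language) (M : structure L) (v : nat -> M) (phi : formula L) : Prop :=
  match phi with
  | Eqf t u => teval v t = teval v u
  | Relf r ts => @rint L M r (fun i => teval v (ts i))
  | Negf p => ~ sat v p
  | Andf p q => sat v p /\ sat v q
  | Exf n p => exists m : M, sat (upd v n m) p
  end.

Fixpoint tfree (L : language) (k : nat) (t : term L) : Prop :=
  match t with
  | Var n => n = k
  | App f ts => exists i, tfree k (ts i)
  end.

Fixpoint ffree (L : language) (k : nat) (phi : formula L) : Prop :=
  match phi with
  | Eqf t u => tfree k t \/ tfree k u
  | Relf r ts => exists i, tfree k (ts i)
  | Negf p => ffree k p
  | Andf p q => ffree k p \/ ffree k q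
  | Exf n p => k <> n /\ ffree k p
  end.

Definition ext {M : Type} (x : seq M) (p : nat -> M) : nat -> M :=
  fun k => nth (p k) x k.

(* x and y (finite tuples) have the same L-type over the parameter set P:
   for every formula whose free variables are among x_0..x_{|x|-1} plus
   further variables interpreted by parameters from P. *)
Definition tp_eq_over (L : language) (M : structure L) (P : M -> Prop)
  (x y : seq M) : Prop :=
  size x = size y /\
  forall (phi : formula L) (p : nat -> M),
    (forall k, (size x <= k)%N -> ffree k phi -> P (p k)) ->
    (sat (ext x p) phi <-> sat (ext y p) phi).

Definition tp_eq (L : language) (M : structure L) (x y : seq M) : Prop :=
  tp_eq_over (fun _ => False) x y.

Definition concat_fam {I M : Type} (c : I -> seq M) (n : nat) (t : 'I_n -> I) : seq M :=
  flatten [seq c (t k) | k <- enum 'I_n].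

Definition indisc_over (L : language) (M : structure L) (P : M -> Prop)
  (m : nat) (a : rat -> m.-tuple M) : Prop :=
  forall (n : nat) (i j : 'I_n -> rat),
    (forall k l : 'I_n, (k < l)%N -> i k < i l) ->
    (forall k l : 'I_n, (k < l)%N -> j k < j l) ->
    tp_eq_over P (concat_fam (fun q => tval (a q)) i)
                 (concat_fam (fun q => tval (a q)) j).

Definition params_of {M : Type} (m : nat) (a : rat -> m.-tuple M) : M -> Prop :=
  fun x => exists (i : rat) (k : 'I_m), x = tnth (a i) k.

Definition mutually_indisc (L : language) (M : structure L)
  (na nb : nat) (a : rat -> na.-tuple M) (b : rat -> nb.-tuple M) : Prop :=
  indisc_over (params_of b) a /\ indisc_over (params_of a) b.

Definition elementary (L : language) (M N : structure L) (e : M -> N) : Prop :=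
  forall (phi : formula L) (v : nat -> M), sat v phi <-> sat (fun k => e (v k)) phi.

(* phi(x;y) with |x| = na, |y| = nb: the variables x_0..x_{na-1} are xbar,
   x_na..x_{na+nb-1} are ybar, and every other free variable x_k is a
   parameter p k from M. *)
Definition has_IP (L : language) (M : structure L) (na nb : nat)
  (phi : formula L) (p : nat -> M) : Prop :=
  exists (N : structure L) (e : M -> N), elementary e /\
  exists (c : nat -> na.-tuple N) (d : (nat -> Prop) -> nb.-tuple N),
    forall (i : nat) (S : nat -> Prop),
      sat (ext (tval (c i) ++ tval (d S)) (fun k => e (p k))) phi <-> S i.

(* U(G_* ) and V(G_* ) are both identified with (Q, <=); R : U x V.
   G_* is (up to the choice of identifications) the unique countable
   ordered bipartite graph with DLO sorts and the extension property below. *)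
Definition random_obg (R : rat -> rat -> Prop) : Prop :=
  (forall (l h : rat), l < h -> forall B1 B2 : seq rat,
     (forall x, x \in B1 -> x \in B2 -> False) ->
     exists u, l < u < h /\ (forall y, y \in B1 -> R u y) /\
                            (forall y, y \in B2 -> ~ R u y)) /\
  (forall (l h : rat), l < h -> forall A1 A2 : seq rat,
     (forall x, x \in A1 -> x \in A2 -> False) ->
     exists v, l < v < h /\ (forall x, x \in A1 -> R x v) /\
                            (forall x, x \in A2 -> ~ R x v)).

(* points of G_*: inl q is q in U, inr q is q in V *)
Definition point := (rat + rat)%type.

Definition isU (p : point) : Prop := if p is inl _ then True else False.

Definition le_pt (p q : point) : Prop :=
  match p, q with
  | inl x, inl y => x <= y
  | inr x, inr y => x <= y
  | _, _ => False
  end.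

Definition R_pt (R : rat -> rat -> Prop) (p q : point) : Prop :=
  match p, q with
  | inl x, inr y => R x y
  | _, _ => False
  end.

Definition qf_eq (R : rat -> rat -> Prop) (n : nat) (t s : 'I_n -> point) : Prop :=
  forall k l : 'I_n,
    (isU (t k) <-> isU (s k)) /\
    (t k = t l <-> s k = s l) /\
    (le_pt (t k) (t l) <-> le_pt (s k) (s l)) /\
    (R_pt R (t k) (t l) <-> R_pt R (s k) (s l)).

Definition fam_tuple {M : Type} (na nb : nat) (a : rat -> na.-tuple M)
  (b : rat -> nb.-tuple M) (p : point) : seq M :=
  match p with inl q => tval (a q) | inr q => tval (b q) end.

Definition Lstar_indisc (L : language) (M : structure L) (R : rat -> rat -> Prop)
  (na nb : nat) (a : rat -> na.-tuple M) (b : rat -> nb.-tuple M) : Prop :=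
  forall (n : nat) (t s : 'I_n -> point), qf_eq R t s ->
    tp_eq (concat_fam (fam_tuple a b) t) (concat_fam (fam_tuple a b) s).

(* Main.v *)
Require Import Defs.
From mathcomp Require Import all_boot all_order all_algebra.
From Stdlib Require Import Classical ClassicalEpsilon FunctionalExtensionality PropExtensionality ProofIrrelevance.
Set Implicit Arguments. Unset Strict Implicit. Unset Printing Implicit Defensive.

Section Syntax.
Variable L : language.

Lemma teval_ext (M : structure L) (v w : nat -> M) (t : term L) :
  (forall k, tfree k t -> v k = w k) -> teval v t = teval w t.
Proof.
elim: t => [n|f ts IH] /= H; first exact: H.
f_equal; apply: functional_extensionality => i.
apply: IH => k Hk; apply: H; by exists i.
Qed.

Lemma sat_ext (M : structure L) (phi : formula L) : forall (v w : nat -> M),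
  (forall k, ffree k phi -> v k = w k) -> (sat v phi <-> sat w phi).
Proof.
elim: phi => [t u|r ts|p IH|p IHp q IHq|n p IH] v w H /=.
- have e1 : teval v t = teval w t by apply: teval_ext => k Hk; apply: H; left.
  have e2 : teval v u = teval w u by apply: teval_ext => k Hk; apply: H; right.
  by rewrite e1 e2.
- have -> : (fun i => teval v (ts i)) = (fun i => teval w (ts i)) => //.
  apply: functional_extensionality => i; apply: teval_ext => k Hk; apply: H; by exists i.
- by rewrite (IH v w H).
- rewrite (IHp v w) ?(IHq v w) // => k Hk; apply: H; by [right|left].
- have E : forall m, sat (upd v n m) p <-> sat (upd w n m) p.
    move=> m; apply: IH => k Hk; rewrite /upd; case: eqP => // /eqP kn.
    apply: H; split => //; exact/eqP.
  by split=> -[m Hm]; exists m; [apply/E|apply/E].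
Qed.

Lemma sat_eq (M : structure L) (phi : formula L) (v w : nat -> M) :
  (forall k, v k = w k) -> (sat v phi <-> sat w phi).
Proof. by move=> H; apply: sat_ext => k _; apply: H. Qed.

Fixpoint tbound (t : term L) : nat :=
  match t with
  | Var n => n.+1
  | App f ts => \max_(i < far f) tbound (ts i)
  end.

Fixpoint fbound (phi : formula L) : nat :=
  match phi with
  | Eqf t u => maxn (tbound t) (tbound u)
  | Relf r ts => \max_(i < rar r) tbound (ts i)
  | Negf p => fbound p
  | Andf p q => maxn (fbound p) (fbound q)
  | Exf n p => fbound p
  end.

Lemma tbound_ok t k : tfree k t -> k < tbound t.
Proof.
elim: t => [n|f ts IH] /=; first by move=> ->.
move=> [i Hi]; apply: leq_trans (IH i Hi) _; exact: (@leq_bigmax _ (fun i => tbound (ts i)) i).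
Qed.

Lemma fbound_ok phi k : ffree k phi -> k < fbound phi.
Proof.
elim: phi => [t u|r ts|p IH|p IHp q IHq|n p IH] /=.
- by case=> /tbound_ok H; rewrite leq_max H ?orbT.
- move=> [i /tbound_ok Hi]; apply: leq_trans Hi _; exact: (@leq_bigmax _ (fun i => tbound (ts i)) i).
- exact: IH.
- by case=> /[dup] H; [move/IHp|move/IHq] => H'; rewrite leq_max H' ?orbT.
- by case=> _ /IH.
Qed.

Definition updn (r : nat -> nat) n m : nat -> nat := fun k => if k == n then m else r k.

Fixpoint tren (r : nat -> nat) (t : term L) : term L :=
  match t with
  | Var n => Var L (r n)
  | App f ts => App (fun i => tren r (ts i))
  end.

Fixpoint fren (B : nat) (r : nat -> nat) (phi : formula L) : formula L :=
  match phi with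
  | Eqf t u => Eqf (tren r t) (tren r u)
  | Relf rr ts => Relf (fun i => tren r (ts i))
  | Negf p => Negf (fren B r p)
  | Andf p q => Andf (fren B r p) (fren B r q)
  | Exf n p => Exf (B + n) (fren B (updn r n (B + n)) p)
  end.

Lemma teval_ren (M : structure L) (v : nat -> M) r t :
  teval v (tren r t) = teval (fun k => v (r k)) t.
Proof.
elim: t => [n|f ts IH] //=; f_equal; apply: functional_extensionality => i; exact: IH.
Qed.

Lemma tfree_ren r t k : tfree k (tren r t) -> exists j, tfree j t /\ k = r j.
Proof.
elim: t => [n|f ts IH] /=; first by move=> <-; exists n.
by move=> [i /IH [j [Hj ->]]]; exists j; split => //; exists i.
Qed.

Lemma ffree_ren B phi : forall r k, ffree k (fren B r phi) -> exists j, ffree j phi /\ k = r j.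
Proof.
elim: phi => [t u|rr ts|p IH|p IHp q IHq|n p IH] r k /=.
- by case=> /tfree_ren [j [Hj ->]]; exists j; split => //; [left|right].
- by move=> [i /tfree_ren [j [Hj ->]]]; exists j; split => //; exists i.
- exact: IH.
- by case=> /[dup] _ ; [move/IHp|move/IHq] => -[j [Hj ->]]; exists j; split => //; [left|right].
- move=> [kn /IH [j [Hj]]]; rewrite /updn; case: eqP => [_ /esym|/eqP jn] //.
  by move=> ->; exists j; split => //; split => //; exact/eqP.
Qed.

Lemma sat_ren (M : structure L) B phi : forall (r : nat -> nat) (v : nat -> M),
  (forall k, ffree k phi -> r k < B \/ r k = B + k) ->
  (sat v (fren B r phi) <-> sat (fun k => v (r k)) phi).
Proof.
elim: phi => [t u|rr ts|p IH|p IHp q IHq|n p IH] r v H /=.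
- by rewrite !teval_ren.
- have -> // : (fun i => teval v (tren r (ts i))) = (fun i => teval (fun k => v (r k)) (ts i)).
  apply: functional_extensionality => i; exact: teval_ren.
- by rewrite IH.
- rewrite IHp ?IHq // => k Hk; apply: H; by [right|left].
- have E : forall m, sat (upd v (B + n) m) (fren B (updn r n (B + n)) p) <-> sat (upd (fun k => v (r k)) n m) p.
    move=> m; rewrite IH.
    * apply: sat_ext => k Hk; rewrite /upd /updn /=; case: (eqVneq k n) => [e|kn]; first by rewrite eqxx.
      case: (H k) => [|rk|rk]; first by split => //; exact/eqP.
      - by case: eqP => // e; move: rk; rewrite e ltnNge leq_addr.
      - by rewrite rk eqn_add2l (negbTE kn).
    * move=> k Hk; rewrite /updn; case: eqP => [->|/eqP kn]; first by right.
      apply: H; split => //; exact/eqP.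
  by split=> -[m Hm]; exists m; [apply/E|apply/E].
Qed.

Lemma sat_ren0 (M : structure L) B phi r (v : nat -> M) :
  (forall k, ffree k phi -> r k < B) ->
  (sat v (fren B r phi) <-> sat (fun k => v (r k)) phi).
Proof. by move=> H; apply: sat_ren => k /H; left. Qed.

End Syntax.

Fixpoint locate (sz : seq nat) (z : nat) : nat * nat :=
  match sz with
  | [::] => (0, z)
  | s :: ss => if z < s then (0, z) else let: (a, b) := locate ss (z - s) in (a.+1, b)
  end.

Lemma locate_ok sz z : z < sumn sz ->
  (locate sz z).1 < size sz /\ (locate sz z).2 < nth 0 sz (locate sz z).1 /\
  z = sumn (take (locate sz z).1 sz) + (locate sz z).2.
Proof.
elim: sz z => [|s ss IH] z //= Hz.
case: ifP => zs /=; first by rewrite add0n.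
have Hz' : z - s < sumn ss by rewrite ltn_subLR // leqNgt zs.
move: (IH _ Hz'); case: (locate ss (z - s)) => a b /= [H1 [H2 H3]].
split => //; split => //; rewrite -addnA -H3 subnKC //; by rewrite leqNgt zs.
Qed.

Lemma nth_flatten_blk (T : Type) (d : T) (ss : seq (seq T)) s j :
  s < size ss -> j < size (nth [::] ss s) ->
  nth d (flatten ss) (sumn (take s (map size ss)) + j) = nth d (nth [::] ss s) j.
Proof.
elim: ss s => [|x ss IH] [|s] //= Hs Hj; first by rewrite add0n nth_cat Hj.
by rewrite -addnA nth_cat ltnNge leq_addr /= addKn IH.
Qed.

Lemma concat_nat (I T : Type) (c : I -> seq T) N (Tn : nat -> I) :
  concat_fam c (fun k : 'I_N => Tn (val k)) = flatten [seq c (Tn s) | s <- iota 0 N].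
Proof. by rewrite /concat_fam -val_enum_ord -map_comp. Qed.

Lemma map_cst (T U : Type) (c : U) (s : seq T) : [seq c | _ <- s] = nseq (size s) c.
Proof. by elim: s => //= x s ->. Qed.

Definition szs (n m na nb : nat) := [seq (if s < n then na else nb) | s <- iota 0 (n + m)].

Lemma szsE n m na nb : szs n m na nb = nseq n na ++ nseq m nb.
Proof.
rewrite /szs iotaD map_cat add0n; congr (_ ++ _).
- rewrite (eq_in_map _ (fun _ => na) _).1; first by rewrite map_cst size_iota.
  by move=> x; rewrite mem_iota add0n => /andP [_ ->].
- rewrite (eq_in_map _ (fun _ => nb) _).1; first by rewrite map_cst size_iota.
  by move=> x; rewrite mem_iota => /andP [H _]; rewrite ltnNge H.
Qed.

Lemma sumn_szs n m na nb : sumn (szs n m na nb) = n * na + m * nb.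
Proof. by rewrite szsE sumn_cat !sumn_nseq mulnC [nb * _]mulnC. Qed.

Lemma size_szs n m na nb : size (szs n m na nb) = n + m.
Proof. by rewrite size_map size_iota. Qed.

Lemma nth_szs n m na nb s : s < n + m -> nth 0 (szs n m na nb) s = if s < n then na else nb.
Proof. by move=> H; rewrite (nth_map 0) ?size_iota // nth_iota. Qed.

Lemma start_lo n m na nb s : s <= n -> sumn (take s (szs n m na nb)) = s * na.
Proof.
move=> H; rewrite szsE take_cat size_nseq.
case: ltnP => H'; first by rewrite take_nseq ?sumn_nseq 1?mulnC // ltnW.
have -> : s = n by apply/eqP; rewrite eqn_leq H H'.
by rewrite subnn take0 cats0 sumn_nseq mulnC.
Qed.

Lemma start_hi n m na nb s : n <= s <= n + m ->
  sumn (take s (szs n m na nb)) = n * na + (s - n) * nb.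
Proof.
move=> /andP [H1 H2]; rewrite szsE take_cat size_nseq ltnNge H1 /= sumn_cat sumn_nseq.
by rewrite take_nseq ?sumn_nseq ?leq_subLR // mulnC [nb * _]mulnC.
Qed.

Section Blocks.
Variables (M : Type) (na nb : nat) (a : rat -> na.-tuple M) (b : rat -> nb.-tuple M).
Variables (n m : nat) (Tn : nat -> point).
Hypothesis TnU : forall s, s < n -> isU (Tn s).
Hypothesis TnV : forall s, n <= s -> ~ isU (Tn s).

Lemma size_fam s : size (fam_tuple a b (Tn s)) = if s < n then na else nb.
Proof.
case: ltnP => H; [move: (TnU H)|move: (TnV H)]; case: (Tn s) => q //= _; by rewrite size_tuple.
Qed.

Definition blocks := [seq fam_tuple a b (Tn s) | s <- iota 0 (n + m)].

Lemma sizes_blocks : map size blocks = szs n m na nb.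
Proof. rewrite /blocks -map_comp; apply: eq_map => s /=; exact: size_fam. Qed.

Lemma size_flat : size (flatten blocks) = n * na + m * nb.
Proof. by rewrite size_flatten /shape sizes_blocks sumn_szs. Qed.

Lemma nth_blocks_at d s j : s < n + m -> j < (if s < n then na else nb) ->
  nth d (flatten blocks) (sumn (take s (szs n m na nb)) + j) = nth d (fam_tuple a b (Tn s)) j.
Proof.
move=> Hs Hj; rewrite -sizes_blocks nth_flatten_blk /blocks ?size_map ?size_iota //.
  by rewrite (nth_map 0) ?size_iota // nth_iota.
by rewrite (nth_map 0) ?size_iota // nth_iota // add0n size_fam.
Qed.

Lemma nth_blocks d z : z < n * na + m * nb ->
  let s := (locate (szs n m na nb) z).1 in let j := (locate (szs n m na nb) z).2 in
  [/\ s < n + m, j < (if s < n then na else nb) &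
  nth d (flatten blocks) z = nth d (fam_tuple a b (Tn s)) j].
Proof.
move=> Hz /=; rewrite -sumn_szs in Hz; have [H1 [H2 H3]] := locate_ok Hz.
rewrite size_szs in H1; rewrite nth_szs // in H2.
split => //; by rewrite {1}H3 nth_blocks_at.
Qed.

End Blocks.

From mathcomp Require classical_sets filter.

Record ufilter := UFilter {
  UF :> (nat -> Prop) -> Prop;
  UF_T : UF (fun _ => True);
  UF_I : forall A B, UF A -> UF B -> UF (fun n => A n /\ B n);
  UF_S : forall A B : nat -> Prop, (forall n, A n -> B n) -> UF A -> UF B;
  UF_0 : ~ UF (fun _ => False);
  UF_ult : forall A, UF A \/ UF (fun n => ~ A n);
  UF_cof : forall N, UF (fun n => N <= n) }.

Module UFex.
Import classical_sets filter.
Lemma ufilter_exists : exists U : ufilter, True.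
Proof.
have [G [GU sFG]] := @ultraFilterLemma nat eventually _.
have GF : ProperFilter G by case: GU.
unshelve eexists (@UFilter G _ _ _ _ _ _) => //.
- exact: filterT.
- move=> A B HA HB; exact: (filterI HA HB).
- move=> A B H HA; exact: (filterS H HA).
- move=> H; apply: (@filter_not_empty _ G GF); exact: H.
- move=> A; case: (in_ultra_setVsetC A GU) => H; [left|right] => //.
- move=> N; apply: sFG; exists N => // n; exact.
Qed.
End UFex.

Section Ultra.
Variables (L : language) (M : structure L) (U : ufilter) (m0 : M).

Definition Ucls (f : nat -> M) := fun g : nat -> M => U (fun n => f n = g n).
Definition Ucar := {X : (nat -> M) -> Prop | exists f, X = Ucls f}.
Definition mkU (f : nat -> M) : Ucar := exist _ (Ucls f) (ex_intro _ f erefl).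
Definition repU (X : Ucar) : nat -> M :=
  proj1_sig (constructive_indefinite_description _ (proj2_sig X)).

Lemma Ucar_eq (X Y : Ucar) : proj1_sig X = proj1_sig Y -> X = Y.
Proof.
case: X => X HX; case: Y => Y HY /= E; subst Y; f_equal; exact: proof_irrelevance.
Qed.

Lemma mkU_rep X : mkU (repU X) = X.
Proof.
apply: Ucar_eq => /=; rewrite /repU.
case: (constructive_indefinite_description _ _) => f Hf /=; by rewrite Hf.
Qed.

Lemma U_neg A : U (fun n => ~ A n) <-> ~ U A.
Proof.
split.
- move=> H1 H2; apply: (@UF_0 U); apply: UF_S (UF_I H1 H2); by move=> n [].
- by case: (@UF_ult U A).
Qed.

Lemma mkU_eq f g : mkU f = mkU g <-> U (fun n => f n = g n).
Proof.
split.
- move=> /(f_equal (@proj1_sig _ _)) /= E.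
  have : Ucls g g by apply: UF_S (@UF_T U).
  by rewrite -E.
- move=> H; apply: Ucar_eq => /=; apply: functional_extensionality => h.
  apply: propositional_extensionality; split => H'.
  + by apply: UF_S (UF_I H H') => n [-> ->].
  + by apply: UF_S (UF_I H H') => n [<- ->].
Qed.

Lemma repU_mk f : U (fun n => repU (mkU f) n = f n).
Proof. by apply/mkU_eq; rewrite mkU_rep. Qed.

Lemma U_fin k (A : 'I_k -> nat -> Prop) : (forall i, U (A i)) -> U (fun n => forall i, A i n).
Proof.
move=> H.
suff: U (fun n => forall i, i \in enum 'I_k -> A i n).
  by apply: UF_S => n Hn i; apply: Hn; rewrite mem_enum.
elim: (enum 'I_k) => [|x s IH]; first by apply: UF_S (@UF_T U).
apply: UF_S (UF_I (H x) IH) => n [H1 H2] i; rewrite inE => /orP [/eqP ->|] //.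
exact: H2.
Qed.

Definition UP : structure L :=
  @Structure L Ucar (fun f args => mkU (fun n => fint (fun i => repU (args i) n)))
                   (fun r args => U (fun n => rint (fun i => repU (args i) n))).

Lemma los_term (V : nat -> nat -> M) t :
  @teval L UP (fun k => mkU (V k)) t = mkU (fun n => teval (fun k => V k n) t).
Proof.
elim: t => [k|f ts IH] //=.
apply/mkU_eq.
apply: UF_S (U_fin (fun i => repU_mk (fun n => teval (fun k => V k n) (ts i)))) => n Hn.
by f_equal; apply: functional_extensionality => i; rewrite IH; exact: Hn.
Qed.

Lemma los (phi : formula L) : forall (V : nat -> nat -> M),
  @sat L UP (fun k => mkU (V k)) phi <-> U (fun n => sat (fun k => V k n) phi).
Proof.
elim: phi => [t u|r ts|p IH|p IHp q IHq|k p IH] V /=.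
- by rewrite !los_term mkU_eq.
- have H := U_fin (fun i => repU_mk (fun n => teval (fun k => V k n) (ts i))).
  have E : forall n, (forall i, repU (mkU (fun n => teval (fun k => V k n) (ts i))) n = teval (fun k => V k n) (ts i)) ->
     (fun i => repU (@teval L UP (fun k => mkU (V k)) (ts i)) n) = (fun i => teval (fun k => V k n) (ts i)).
    move=> n Hn; apply: functional_extensionality => i; rewrite los_term; exact: Hn.
  split => H'.
  + by apply: UF_S (UF_I H H') => n [/E <-].
  + by apply: UF_S (UF_I H H') => n [/E ->].
- by rewrite IH U_neg.
- rewrite IHp IHq; split.
  + by case=> H1 H2; exact: UF_I.
  + by move=> H; split; apply: UF_S H => n [].
- pose Vu (W : nat -> M) := fun j => if j == k then W else V j.
  have E : forall W, @sat L UP (upd (fun j => mkU (V j)) k (mkU W)) p <->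
                     U (fun n => sat (upd (fun j => V j n) k (W n)) p).
    move=> W; rewrite (@sat_eq L UP p _ (fun j => mkU (Vu W j))); last first.
      by move=> j; rewrite /upd /Vu; case: eqP.
    rewrite IH; split; apply: UF_S => n;
      (rewrite (@sat_eq L M p (fun j => Vu W j n) (upd (fun j => V j n) k (W n))); last by move=> j; rewrite /upd /Vu; case: eqP); done.
  split.
  + move=> [X HX]; rewrite -(mkU_rep X) in HX; move/E: HX; apply: UF_S => n H; by eexists; exact: H.
  + move=> H.
    pose W := fun n => match excluded_middle_informative (exists x, sat (upd (fun j => V j n) k x) p) with
                       | left e => proj1_sig (constructive_indefinite_description _ e)
                       | right _ => m0 end.
    exists (mkU W); apply/E; apply: UF_S H => n Hn; rewrite /W.
    case: excluded_middle_informative => // e.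
    by case: (constructive_indefinite_description _ _).
Qed.

Definition Uemb (x : M) : UP := mkU (fun _ => x).

Lemma Uemb_elem : elementary Uemb.
Proof.
move=> phi v; rewrite /Uemb (los phi (fun k _ => v k)); split.
- by move=> H; apply: UF_S (@UF_T U).
- by move=> H; apply: NNPP => H'; apply: (@UF_0 U); apply: UF_S H.
Qed.

End Ultra.

From mathcomp Require Import zify.
From Stdlib Require Import Lia.
Import Order.TTheory GRing.Theory Num.Theory.

Definition pb (P : Prop) : bool := if excluded_middle_informative P then true else false.
Lemma pbP (P : Prop) : pb P <-> P.
Proof. by rewrite /pb; case: excluded_middle_informative. Qed.
Lemma pbN (P : Prop) : ~~ pb P <-> ~ P.
Proof. by rewrite /pb; case: excluded_middle_informative. Qed.

Definition Config (L : language) (M : structure L) (R : rat -> rat -> Prop) (na nb : nat)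
  (a : rat -> na.-tuple M) (b : rat -> nb.-tuple M) (psi : formula L) (p : nat -> M) : Prop :=
  (forall k, (na + nb <= k)%N -> ffree k psi -> params_of a (p k) \/ params_of b (p k)) /\
  exists (lu hu lv hv : rat) (UA1 UA2 VB1 VB2 : seq rat),
    (lu < hu)%R /\ (lv < hv)%R /\
    (forall x, x \in UA1 -> x \in UA2 -> False) /\ (forall y, y \in VB1 -> y \in VB2 -> False) /\
    (forall x, x \in UA1 ++ UA2 -> ~ (lu < x < hu)%R) /\ (forall y, y \in VB1 ++ VB2 -> ~ (lv < y < hv)%R) /\
    forall u v, (lu < u < hu)%R -> (lv < v < hv)%R ->
      (forall y, y \in VB1 -> R u y) -> (forall y, y \in VB2 -> ~ R u y) ->
      (forall x, x \in UA1 -> R x v) -> (forall x, x \in UA2 -> ~ R x v) ->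
      (sat (ext (tval (a u) ++ tval (b v)) p) psi <-> R u v).

Section IP.
Variables (L : language) (M : structure L) (R : rat -> rat -> Prop) (na nb : nat)
  (a : rat -> na.-tuple M) (b : rat -> nb.-tuple M) (psi : formula L) (p : nat -> M).
Variable U : ufilter.
Hypothesis HR : random_obg R.

Lemma config_IP : Config R a b psi p -> has_IP na nb psi p.
Proof.
move=> [_ [lu [hu [lv [hv [UA1 [UA2 [VB1 [VB2 [Hu [Hv [dUA [dVB [oUA [oVB Hc]]]]]]]]]]]]]]].
have [obg1 obg2] := HR.
pose P1 h u := (lu < u < h)%R /\ (forall y, y \in VB1 -> R u y) /\ (forall y, y \in VB2 -> ~ R u y).
have ex1 : forall h, (lu < h)%R -> exists u, P1 h u.
  move=> h lh; have [u [Hu1 [Hu2 Hu3]]] := obg1 lu h lh VB1 VB2 dVB; by exists u.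
pose pick h := match excluded_middle_informative (lu < h)%R with
               | left e => proj1_sig (constructive_indefinite_description _ (ex1 h e))
               | right _ => h end.
have pickP : forall h, (lu < h)%R -> P1 h (pick h).
  move=> h lh; rewrite /pick; case: excluded_middle_informative => // e.
  by case: (constructive_indefinite_description _ _).
pose u i := iter i.+1 pick hu.
have uP : forall i, P1 (if i is i'.+1 then u i' else hu) (u i).
  elim=> [|i IH]; first exact: pickP.
  apply: pickP; case: IH => [/andP [H _] _]; done.
have uI : forall i, (lu < u i < hu)%R.
  elim=> [|i IH]; first by case: (uP 0).
  case: (uP i.+1) => [/andP [H1 H2] _]; case/andP: IH => _ H3.
  by rewrite H1 /= (lt_trans H2 H3).
have uD : forall i j, (i < j)%N -> (u j < u i)%R.
  move=> i j; elim: j => // j IH; rewrite ltnS leq_eqVlt => /orP [/eqP ->|/IH H].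
    by case: (uP j.+1) => [/andP [_ H] _].
  case: (uP j.+1) => [/andP [_ H'] _]; exact: lt_trans H' H.
have uinj : forall i j, u i = u j -> i = j.
  move=> i j E; case: (ltngtP i j) => // H; move: (uD _ _ H); by rewrite E ltxx.
pose B1 n (S : nat -> Prop) := UA1 ++ [seq u i | i <- iota 0 n & pb (S i)].
pose B2 n (S : nat -> Prop) := UA2 ++ [seq u i | i <- iota 0 n & ~~ pb (S i)].
have dB : forall n S x, x \in B1 n S -> x \in B2 n S -> False.
  move=> n S x; rewrite !mem_cat => /orP [H1|/mapP [i Hi ->]] /orP [H2|/mapP [j Hj E]].
  - exact: dUA H1 H2.
  - move: (uI j); rewrite -E; apply: oUA; by rewrite mem_cat H1.
  - move: (uI i); apply: oUA; by rewrite mem_cat H2 orbT.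
  - move: Hi Hj; rewrite !mem_filter (uinj _ _ E) => /andP [H1 _] /andP [H2 _].
    by rewrite H1 in H2.
have ex2 : forall n S, exists v, (lv < v < hv)%R /\ (forall x, x \in B1 n S -> R x v) /\ (forall x, x \in B2 n S -> ~ R x v).
  move=> n S; have [v [H1 [H2 H3]]] := obg2 lv hv Hv (B1 n S) (B2 n S) (@dB n S); by exists v.
pose v n S := proj1_sig (constructive_indefinite_description _ (ex2 n S)).
have vP : forall n S, (lv < v n S < hv)%R /\ (forall x, x \in B1 n S -> R x (v n S)) /\ (forall x, x \in B2 n S -> ~ R x (v n S)).
  by move=> n S; rewrite /v; case: (constructive_indefinite_description _ _).
have key : forall i S n, sat (ext (tval (a (u i)) ++ tval (b (v n S))) p) psi <-> R (u i) (v n S).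
  move=> i S n; case: (uP i) => _ [H1 H2]; case: (vP n S) => H3 [H4 H5].
  apply: Hc => //.
  - by move=> x Hx; apply: H4; rewrite mem_cat Hx.
  - by move=> x Hx; apply: H5; rewrite mem_cat Hx.
have key2 : forall i S n, (i < n)%N -> (R (u i) (v n S) <-> S i).
  move=> i S n Hi; case: (vP n S) => _ [H4 H5]; split.
  - move=> HR'; apply: NNPP => nS; apply: (H5 (u i)) HR'.
    rewrite mem_cat; apply/orP; right; apply: map_f; rewrite mem_filter mem_iota /= Hi.
    by rewrite andbT; apply/pbN.
  - move=> Si; apply: H4; rewrite mem_cat; apply/orP; right; apply: map_f.
    by rewrite mem_filter mem_iota /= Hi andbT; apply/pbP.
pose N := UP M U.
pose e := @Uemb L M U.
exists N, e; split; first exact: (Uemb_elem U (p 0)).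
pose dseq S := [seq mkU U (fun n => nth (p 0) (tval (b (v n S))) j) | j <- iota 0 nb].
have dsz : forall S, size (dseq S) == nb by move=> S; rewrite size_map size_iota.
exists (fun i => map_tuple e (a (u i))), (fun S => Tuple (dsz S)).
move=> i S /=.
pose V k n := ext (tval (a (u i)) ++ tval (b (v n S))) p k.
rewrite (@sat_eq L N psi _ (fun k => mkU U (V k))); last first.
  move=> k; rewrite /ext /V /=; case: (ltnP k na) => Hk.
  - rewrite nth_cat size_map size_tuple Hk (nth_map (p k)) ?size_tuple //.
    rewrite /e /Uemb; apply/mkU_eq; apply: UF_S (UF_T U) => n _.
    by rewrite /ext nth_cat size_tuple Hk.
  - rewrite nth_cat size_map size_tuple ltnNge Hk /=.
    case: (ltnP (k - na) nb) => Hk2.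
    + rewrite (nth_map 0) ?size_iota // nth_iota // add0n.
      apply/mkU_eq; apply: UF_S (UF_T U) => n _.
      by rewrite /ext nth_cat size_tuple ltnNge Hk /=; apply: set_nth_default; rewrite size_tuple.
    + rewrite nth_default ?size_map ?size_iota //.
      rewrite /e /Uemb; apply/mkU_eq; apply: UF_S (UF_T U) => n _.
      by rewrite /ext nth_default // size_cat !size_tuple; lia.
rewrite (los U (p 0)); split.
- move=> H; apply: NNPP => nS.
  apply: (@UF_0 U); apply: UF_S (UF_I H (UF_cof U i.+1)) => n [H1 H2].
  by apply: nS; apply/(key2 i S n H2)/key.
- move=> Si; apply: UF_S (UF_cof U i.+1) => n Hn.
  by apply/key/(key2 i S n Hn).
Qed.

End IP.

From mathcomp Require Import zify ring lra.

Section Layout.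
Variables (L : language) (M : structure L) (R : rat -> rat -> Prop) (na nb : nat)
  (a : rat -> na.-tuple M) (b : rat -> nb.-tuple M).
Hypothesis HL : Lstar_indisc R a b.
Variables (n m : nat).

Definition Tn (u : nat -> rat) (ws : seq rat) : nat -> point :=
  fun s => if s < n then inl (u s) else inr (nth 0%R ws (s - n)).

Lemma TnU u ws s : s < n -> isU (Tn u ws s).
Proof. by rewrite /Tn => ->. Qed.
Lemma TnV u ws s : n <= s -> ~ isU (Tn u ws s).
Proof. by rewrite /Tn ltnNge => ->. Qed.

Definition Z u ws := flatten (blocks a b n m (Tn u ws)).

Lemma Z_concat u ws :
  concat_fam (fam_tuple a b) (fun k : 'I_(n + m) => Tn u ws (val k)) = Z u ws.
Proof. by rewrite concat_nat. Qed.

Lemma size_Z u ws : size (Z u ws) = n * na + m * nb.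
Proof. rewrite /Z; apply: size_flat; [exact: TnU|exact: TnV]. Qed.

Lemma nth_Z d u ws z : z < n * na + m * nb ->
  let s := (locate (szs n m na nb) z).1 in let j := (locate (szs n m na nb) z).2 in
  [/\ s < n + m, j < (if s < n then na else nb) &
  nth d (Z u ws) z = nth d (fam_tuple a b (Tn u ws s)) j].
Proof. rewrite /Z; apply: nth_blocks; [exact: TnU|exact: TnV]. Qed.

Lemma nth_Z_at d u ws s j : s < n + m -> j < (if s < n then na else nb) ->
  nth d (Z u ws) (sumn (take s (szs n m na nb)) + j) = nth d (fam_tuple a b (Tn u ws s)) j.
Proof. rewrite /Z; apply: nth_blocks_at; [exact: TnU|exact: TnV]. Qed.

Lemma Z_prefix u ws : Z u ws = flatten [seq tval (a (u s)) | s <- iota 0 n] ++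
                               flatten [seq tval (b (nth 0%R ws s)) | s <- iota 0 m].
Proof.
rewrite /Z /blocks iotaD map_cat flatten_cat add0n; congr (_ ++ _).
- congr flatten; apply/eq_in_map => s; rewrite mem_iota add0n /Tn => /andP [_ ->] //.
- have -> : iota n m = [seq n + i | i <- iota 0 m] by rewrite -iotaDl addn0.
  rewrite -map_comp; congr flatten; apply: eq_map => s /=.
  by rewrite /Tn ltnNge leq_addr /= addKn.
Qed.

Lemma eq_iff_le (x y x' y' : rat) : ((x <= y)%R <-> (x' <= y')%R) -> ((y <= x)%R <-> (y' <= x')%R) ->
  (x = y <-> x' = y').
Proof.
move=> H1 H2; split => E.
- subst y; apply/eqP; rewrite eq_le; apply/andP; split; [apply/H1|apply/H2]; exact: lexx.
- subst y'; apply/eqP; rewrite eq_le; apply/andP; split; [apply/H1|apply/H2]; exact: lexx.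
Qed.

Lemma same_truth (theta : formula L) u u' ws ws' d :
  (forall k, ffree k theta -> k < n * na + m * nb) ->
  (forall s t, s < n -> t < n -> ((u s <= u t)%R <-> (u' s <= u' t)%R)) ->
  (forall s t, s < m -> t < m -> ((nth 0%R ws s <= nth 0%R ws t)%R <-> (nth 0%R ws' s <= nth 0%R ws' t)%R)) ->
  (forall s t, s < n -> t < m -> (R (u s) (nth 0%R ws t) <-> R (u' s) (nth 0%R ws' t))) ->
  (sat (ext (Z u ws) d) theta <-> sat (ext (Z u' ws') d) theta).
Proof.
move=> Hth Hu Hw HRR.
have := @HL (n + m) (fun k : 'I_(n + m) => Tn u ws (val k)) (fun k : 'I_(n + m) => Tn u' ws' (val k)).
rewrite !Z_concat => H.
have {}H := H _; case: H => [|_ H]; last first.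
  apply: H => k; rewrite size_Z => Hk /Hth; by rewrite ltnNge Hk.
move=> k l; rewrite /Tn.
have kN := ltn_ord k; have lN := ltn_ord l.
case: (ltnP k n) => Hk; case: (ltnP l n) => Hl /=.
- have E1 := Hu _ _ Hk Hl; have E2 := Hu _ _ Hl Hk.
  split => //; split; last by split.
  have := eq_iff_le E1 E2; split => [E|E].
  + by case: E => /H ->.
  + by congr inl; apply/H; case: E.
- split; first by []. split; first by split => E; discriminate E.
  split; first by []. apply: HRR; lia.
- split; first by []. split; first by split => E; discriminate E.
  by [].
- have E1 := Hw (k - n) (l - n) ltac:(lia) ltac:(lia).
  have E2 := Hw (l - n) (k - n) ltac:(lia) ltac:(lia).
  split => //; split; last by split.
  have := eq_iff_le E1 E2; split => [E|E].
  + by case: E => /H ->.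
  + by congr inr; apply/H; case: E.
Qed.

End Layout.

Definition Slot (n : nat) (u : nat -> rat) := forall s, s < n -> (s%:R < u s < s.+1%:R)%R.

Lemma slot_le n u s t : Slot n u -> s < n -> t < n -> ((u s <= u t)%R <-> s <= t).
Proof.
move=> H Hs Ht; have /andP [H1 H2] := H s Hs; have /andP [H3 H4] := H t Ht.
case: (ltngtP s t) => E.
- split => // _; apply: ltW; apply: lt_trans H2 _; apply: le_lt_trans H3; by rewrite ler_nat.
- split => // H5; exfalso; have : (u t < u s)%R.
    apply: lt_trans H4 _; apply: le_lt_trans H1; by rewrite ler_nat.
  by rewrite ltNge H5.
- by subst t; split => // _; exact: lexx.
Qed.

Lemma discrete_step (f : nat -> Prop) N : ~ (f 0 <-> f N) -> exists t, t < N /\ ~ (f t <-> f t.+1).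
Proof.
elim: N => [|N IH] H; first by exfalso; apply: H.
case: (classic (f N <-> f N.+1)) => E.
- have [t [Ht Ht']] : exists t, t < N /\ ~ (f t <-> f t.+1).
    apply: IH => E'; apply: H; rewrite E'; exact: E.
  by exists t; split => //; apply: ltnW.
- by exists N.
Qed.

Lemma sep_point (ws : seq rat) (w : rat) : exists lo hi, (lo < w < hi)%R /\
  forall x, x \in ws -> x <> w -> (x <= lo)%R \/ (hi <= x)%R.
Proof.
elim: ws => [|x ws [lo [hi [/andP [H1 H2] H3]]]].
  exists (w - 1)%R, (w + 1)%R; split => //.
  by apply/andP; split; lra.
case: (ltgtP x w) => E.
- exists (Num.max lo x), hi; split; first by rewrite gt_max H1 E H2.
  move=> y; rewrite inE => /orP [/eqP ->|Hy] Hn; first by left; rewrite le_max lexx orbT.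
  case: (H3 y Hy Hn) => H; [left; rewrite le_max H //|by right].
- exists lo, (Num.min hi x); split; first by rewrite lt_min H1 H2 E.
  move=> y; rewrite inE => /orP [/eqP ->|Hy] Hn; first by right; rewrite ge_min lexx orbT.
  case: (H3 y Hy Hn) => H; [by left|right; rewrite ge_min H //].
- exists lo, hi; split; first by rewrite H1 H2.
  move=> y; rewrite inE => /orP [/eqP ->|Hy] Hn //; exact: H3.
Qed.

Definition ofun n (i : 'I_n -> rat) : nat -> rat := fun s => oapp i 0%R (insub s).

Lemma ofun_lt n (i : 'I_n -> rat) s (Hs : s < n) : ofun i s = i (Ordinal Hs).
Proof. by rewrite /ofun insubT. Qed.

Lemma ofunE n (i : 'I_n -> rat) : i = fun k : 'I_n => ofun i (val k).
Proof. by apply: functional_extensionality => k; rewrite /ofun valK. Qed.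

Lemma inc_le n (i : 'I_n -> rat) : (forall k l : 'I_n, k < l -> (i k < i l)%R) ->
  forall s t, s < n -> t < n -> ((ofun i s <= ofun i t)%R <-> s <= t).
Proof.
move=> H s t Hs Ht; rewrite (ofun_lt i Hs) (ofun_lt i Ht).
case: (ltngtP s t) => E.
- by split => // _; apply: ltW; apply: H.
- split => // H5; exfalso; have : (i (Ordinal Ht) < i (Ordinal Hs))%R by apply: H.
  by rewrite ltNge H5.
- subst t; split => // _; rewrite (_ : Ordinal Hs = Ordinal Ht) //; exact: val_inj.
Qed.

Lemma size_flat_unif (T : Type) (f : nat -> seq T) n w :
  (forall s, size (f s) = w) -> size (flatten [seq f s | s <- iota 0 n]) = n * w.
Proof.
move=> H; rewrite size_flatten /shape -map_comp (eq_map (g := fun _ => w)) ?map_cst ?sumn_nseq ?size_iota 1?mulnC //.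
Qed.

Lemma slot_out n u s k : Slot n u -> s < n -> s != k -> ~ (k%:R < u s < k.+1%:R)%R.
Proof.
move=> H Hs Nk /andP [H3 H4]; have /andP [H1 H2] := H s Hs.
case: (ltngtP s k) => E.
- have : (u s < k%:R)%R by apply: lt_le_trans H2 _; rewrite ler_nat.
  by rewrite ltNge (ltW H3).
- have : (k.+1%:R < u s)%R by apply: le_lt_trans H1; rewrite ler_nat.
  by rewrite ltNge (ltW H4).
- by rewrite E eqxx in Nk.
Qed.

Lemma fsep_le (ws : seq rat) (w v lo hi : rat) x y :
  (lo < w < hi)%R -> (lo < v < hi)%R ->
  (forall x, x \in ws -> x <> w -> (x <= lo)%R \/ (hi <= x)%R) -> x \in ws -> y \in ws ->
  (((if x == w then v else x) <= (if y == w then v else y))%R <-> (x <= y)%R).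
Proof.
move=> /andP [H1 H2] /andP [H3 H4] Hs Hx Hy.
case: (eqVneq x w) => Ex; case: (eqVneq y w) => Ey.
- by subst; rewrite !lexx.
- subst x; case: (Hs y Hy (elimN eqP Ey)) => Hy'.
  + split => H; exfalso; [have : (v <= lo)%R by apply: le_trans H Hy'|have : (w <= lo)%R by apply: le_trans H Hy'];
    [by rewrite leNgt H3|by rewrite leNgt H1].
  + by split => _; [exact: ltW (lt_le_trans H2 Hy')|exact: ltW (lt_le_trans H4 Hy')].
- subst y; case: (Hs x Hx (elimN eqP Ex)) => Hx'.
  + by split => _; [exact: ltW (le_lt_trans Hx' H1)|exact: ltW (le_lt_trans Hx' H3)].
  + split => H; exfalso; [have : (hi <= v)%R by apply: le_trans Hx' H|have : (hi <= w)%R by apply: le_trans Hx' H];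
    [by rewrite leNgt H4|by rewrite leNgt H2].
- by [].
Qed.

Lemma final_logic (A B r tau tau' : Prop) : ~ (tau <-> tau') ->
  ((r <-> B) -> (A <-> tau)) -> (~ (r <-> B) -> (A <-> tau')) ->
  ((B <-> tau) -> (A <-> r)) /\ (~ (B <-> tau) -> (~ A <-> r)).
Proof.
case: (classic A); case: (classic B); case: (classic r); case: (classic tau); case: (classic tau');
  tauto.
Qed.

Section Core.
Variables (L : language) (M : structure L) (R : rat -> rat -> Prop) (na nb : nat)
  (a : rat -> na.-tuple M) (b : rat -> nb.-tuple M).
Hypothesis HR : random_obg R.
Hypothesis HL : Lstar_indisc R a b.

Lemma size_concat_a n (i : 'I_n -> rat) : size (concat_fam (fun q => tval (a q)) i) = n * na.
Proof. by rewrite {1}(ofunE i) concat_nat; apply: size_flat_unif => s; exact: size_tuple. Qed.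

Lemma core : ~ indisc_over (params_of b) a -> exists psi p, Config R a b psi p.
Proof.
move=> Hn; have [obg1 obg2] := HR.
have [n [i [j [Hi [Hj [phi [p [Hp Hneq]]]]]]]] : exists n (i j : 'I_n -> rat),
   (forall k l : 'I_n, k < l -> (i k < i l)%R) /\ (forall k l : 'I_n, k < l -> (j k < j l)%R) /\
   exists phi p, (forall k, n * na <= k -> ffree k phi -> params_of b (p k)) /\
     ~ (sat (ext (concat_fam (fun q => tval (a q)) i) p) phi <->
        sat (ext (concat_fam (fun q => tval (a q)) j) p) phi).
  apply: NNPP => H; apply: Hn => n i j Hi Hj; split; first by rewrite !size_concat_a.
  move=> phi p Hp; apply: NNPP => Hne; apply: H; exists n, i, j; split => //; split => //.
  exists phi, p; split => //; move=> k Hk; apply: Hp; by rewrite size_concat_a.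
pose iu := ofun i; pose ju := ofun j.
have Ei : concat_fam (fun q => tval (a q)) i = flatten [seq tval (a (iu s)) | s <- iota 0 n].
  by rewrite {1}(ofunE i) concat_nat.
have Ej : concat_fam (fun q => tval (a q)) j = flatten [seq tval (a (ju s)) | s <- iota 0 n].
  by rewrite {1}(ofunE j) concat_nat.
pose B := maxn (fbound phi) (n * na).
pose m := B - n * na.
have Hsel : forall k, exists qp : rat * nat, n * na <= k -> ffree k phi ->
    qp.2 < nb /\ p k = nth (p k) (tval (b qp.1)) qp.2.
  move=> k; case: (classic (n * na <= k /\ ffree k phi)) => [[H1 H2]|H].
  - have [q [pos E]] := Hp k H1 H2; exists (q, val pos); move=> _ _; split; first exact: ltn_ord.
    by rewrite {1}E (tnth_nth (p k)).
  - by exists (0%R, 0); move=> H1 H2; exfalso; apply: H.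
pose sel k := proj1_sig (constructive_indefinite_description _ (Hsel k)).
have selP : forall k, n * na <= k -> ffree k phi ->
    (sel k).2 < nb /\ p k = nth (p k) (tval (b (sel k).1)) (sel k).2.
  by move=> k; rewrite /sel; case: (constructive_indefinite_description _ _).
pose ws := [seq (sel (n * na + s)).1 | s <- iota 0 m].
have size_ws : size ws = m by rewrite size_map size_iota.
have nth_ws : forall s, s < m -> nth 0%R ws s = (sel (n * na + s)).1.
  by move=> s Hs; rewrite (nth_map 0) ?size_iota // nth_iota.
pose SZ := n * na + m * nb.
pose rho k := if k < n * na then k else n * na + (k - n * na) * nb + (sel k).2.
have Hrho : forall k, ffree k phi -> rho k < SZ.
  move=> k Hk; have kB : k < B by rewrite leq_max fbound_ok.
  rewrite /rho; case: (ltnP k (n * na)) => H1; first by rewrite /SZ; lia.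
  have [Hpos _] := selP k H1 Hk.
  have : (k - n * na) * nb + (sel k).2 < m * nb.
    apply: (@leq_trans ((k - n * na).+1 * nb)); first by rewrite mulSn; lia.
    apply: leq_mul => //; rewrite /m; lia.
  rewrite /SZ; lia.
pose theta := fren SZ rho phi.
have Hth : forall z, ffree z theta -> z < n * na + m * nb.
  by move=> z /ffree_ren [k [Hk ->]]; exact: Hrho.
have claimA : forall u : nat -> rat, sat (ext (Z a b n m u ws) p) theta <->
    sat (ext (flatten [seq tval (a (u s)) | s <- iota 0 n]) p) phi.
  move=> u; rewrite /theta sat_ren0 //; apply: sat_ext => k Hk; rewrite /ext /rho.
  have sxu : size (flatten [seq tval (a (u s)) | s <- iota 0 n]) = n * na.
    by apply: size_flat_unif => s; exact: size_tuple.
  case: (ltnP k (n * na)) => H1.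
  - by rewrite Z_prefix nth_cat sxu H1.
  - have [Hpos Ep] := selP k H1 Hk.
    have kB : k < B by rewrite leq_max fbound_ok.
    have Hx : k - n * na < m by rewrite /m; lia.
    rewrite [RHS]nth_default ?sxu //.
    have -> : n * na + (k - n * na) * nb = sumn (take (n + (k - n * na)) (szs n m na nb)).
      by rewrite start_hi ?addKn //; apply/andP; split; lia.
    have Hs1 : n + (k - n * na) < n + m by lia.
    have Hj1 : (sel k).2 < (if n + (k - n * na) < n then na else nb).
      by have -> : (n + (k - n * na) < n) = false by lia.
    rewrite (@nth_Z_at L M na nb a b n m _ u ws _ _ Hs1 Hj1).
    rewrite /Tn ltnNge leq_addr /= addKn nth_ws // subnKC //.
    by rewrite Ep; apply: set_nth_default; rewrite size_tuple.
have truth_i : sat (ext (Z a b n m iu ws) p) theta <->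
    sat (ext (concat_fam (fun q => tval (a q)) i) p) phi by rewrite Ei; exact: claimA.
have truth_j : sat (ext (Z a b n m ju ws) p) theta <->
    sat (ext (concat_fam (fun q => tval (a q)) j) p) phi by rewrite Ej; exact: claimA.
have Hreal : forall pi : nat -> rat -> Prop, exists u, Slot n u /\
    forall s w, s < n -> w \in ws -> (R (u s) w <-> pi s w).
  move=> pi.
  have Hs : forall s, exists x, (s%:R < x < s.+1%:R)%R /\
      (forall w, w \in [seq w <- ws | pb (pi s w)] -> R x w) /\
      (forall w, w \in [seq w <- ws | ~~ pb (pi s w)] -> ~ R x w).
    move=> s; apply: obg1; first by rewrite ltr_nat.
    by move=> w; rewrite !mem_filter => /andP [H1 _] /andP [H2 _]; rewrite H1 in H2.
  exists (fun s => proj1_sig (constructive_indefinite_description _ (Hs s))); split.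
  - by move=> s _; case: (constructive_indefinite_description _ _) => x [].
  - move=> s w _ Hw; case: (constructive_indefinite_description _ _) => x [_ [H1 H2]] /=.
    case: (classic (pi s w)) => Hp'.
    + by split => // _; apply: H1; rewrite mem_filter Hw andbT; apply/pbP.
    + by split => // H; exfalso; apply: (H2 w) H; rewrite mem_filter Hw andbT; apply/pbN.
pose E := [seq (s, w) | s <- iota 0 n, w <- undup ws].
pose pi t s w := if (s, w) \in take t E then R (ju s) w else R (iu s) w.
pose ureal t := proj1_sig (constructive_indefinite_description _ (Hreal (pi t))).
have urealP : forall t, Slot n (ureal t) /\
    forall s w, s < n -> w \in ws -> (R (ureal t s) w <-> pi t s w).
  by move=> t; rewrite /ureal; case: (constructive_indefinite_description _ _).
pose truth t := sat (ext (Z a b n m (ureal t) ws) p) theta.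
have ordU : forall u u', Slot n u -> Slot n u' ->
    forall s t, s < n -> t < n -> ((u s <= u t)%R <-> (u' s <= u' t)%R).
  by move=> u u' H H' s t Hs Ht; rewrite (slot_le H Hs Ht) (slot_le H' Hs Ht).
have T0 : truth 0 <-> sat (ext (concat_fam (fun q => tval (a q)) i) p) phi.
  rewrite -truth_i /truth; apply: (same_truth HL) => //.
  - move=> s t Hs Ht; by rewrite (slot_le (urealP 0).1 Hs Ht) (inc_le Hi Hs Ht).
  - move=> s t Hs Ht; have Hw : nth 0%R ws t \in ws by rewrite mem_nth ?size_ws.
    rewrite (urealP 0).2 //; rewrite /pi take0 in_nil; exact: iff_refl.

have TE : truth (size E) <-> sat (ext (concat_fam (fun q => tval (a q)) j) p) phi.
  rewrite -truth_j /truth; apply: (same_truth HL) => //.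
  - move=> s t Hs Ht; by rewrite (slot_le (urealP _).1 Hs Ht) (inc_le Hj Hs Ht).
  - move=> s t Hs Ht; have Hw : nth 0%R ws t \in ws by rewrite mem_nth ?size_ws.
    rewrite (urealP _).2 //; rewrite /pi take_size.
    have -> : (s, nth 0%R ws t) \in E.
      by apply: allpairs_f; rewrite ?mem_iota ?mem_undup.
    exact: iff_refl.
have [t [Ht Hdiff]] : exists t, t < size E /\ ~ (truth t <-> truth t.+1).
  apply: discrete_step => H; apply: Hneq; rewrite -T0 -TE; exact: H.
pose kw := nth (0, 0%R) E t.
have kwE : kw \in E by apply: mem_nth.
case/allpairsP: kwE => -[ks wst] [/= Hks Hwst Ekw].
rewrite mem_iota add0n /= in Hks; rewrite mem_undup in Hwst.
pose u1 := ureal t; pose u2 := ureal t.+1.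
have [S1 P1] := urealP t; have [S2 P2] := urealP t.+1.
have takeS : forall x, (x \in take t.+1 E) = (x == kw) || (x \in take t E).
  by move=> x; rewrite (take_nth (0, 0%R) Ht) mem_rcons in_cons.
have agree : forall s w, s < n -> w \in ws -> (s, w) <> (ks, wst) -> (R (u1 s) w <-> R (u2 s) w).
  move=> s w Hs Hw Ne; rewrite P1 // P2 // /pi takeS.
  have -> : ((s, w) == kw) = false by apply/eqP; rewrite Ekw.
  done.
have differ : ~ (R (u1 ks) wst <-> R (u2 ks) wst).
  move=> E'; apply: Hdiff; apply: (same_truth HL) => //.
  - by move=> s t' Hs Ht'; apply: ordU.
  - move=> s t' Hs Ht'; case: (classic ((s, nth 0%R ws t') = (ks, wst))) => [[-> ->]|Ne] //.
    by apply: agree => //; rewrite mem_nth ?size_ws.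
have [lo [hi [Hlh Hsep]]] := sep_point ws wst.
pose rho2 z := if (locate (szs n m na nb) z).1 == ks then (locate (szs n m na nb) z).2
  else if (n <= (locate (szs n m na nb) z).1) &&
          (nth 0%R ws ((locate (szs n m na nb) z).1 - n) == wst)
       then na + (locate (szs n m na nb) z).2 else na + nb + z.
pose p2 k := nth (p 0) (Z a b n m u1 ws) (k - (na + nb)).
pose BB := na + nb + SZ.
pose psi0 := fren BB rho2 theta.
have Hrho2 : forall z, ffree z theta -> rho2 z < BB.
  move=> z Hz; have Hz' := Hth z Hz.
  have [Hs Hjj _] := nth_Z a b (p 0) u1 ws Hz'.
  move: Hs Hjj; rewrite /rho2.
  set s := (locate _ z).1; set jj := (locate _ z).2 => Hs Hjj.
  case: eqP => [Es|_].
  - move: Hjj; rewrite Es Hks => Hjj; rewrite /BB; lia.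
  - case: ifP => [/andP [Hn' _]|_]; last by rewrite /BB /SZ; lia.
    move: Hjj; rewrite [s < n]ltnNge Hn' /= => Hjj; rewrite /BB; lia.
pose f v w := if w == wst then v else w.
have key : forall u v, (ks%:R < u < ks.+1%:R)%R ->
   (sat (ext (tval (a u) ++ tval (b v)) p2) psi0 <->
    sat (ext (Z a b n m (fun s => if s == ks then u else u1 s) [seq f v w | w <- ws]) p) theta).
  move=> u v Hu; rewrite /psi0 sat_ren0 //; apply: sat_ext => z Hz.
  have Hz' := Hth z Hz.
  have [Hs Hjj E1] := nth_Z a b (p 0) (fun s => if s == ks then u else u1 s) [seq f v w | w <- ws] Hz'.
  have [_ _ E2] := nth_Z a b (p 0) u1 ws Hz'.
  rewrite /ext [RHS](set_nth_default (p 0)) ?size_Z // E1.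
  move: Hs Hjj E1 E2; rewrite /rho2.
  set s := (locate _ z).1; set jj := (locate _ z).2 => Hs Hjj E1 E2.
  case: eqP => [Es|Ns].
  - have sn : s < n by rewrite Es.
    move: Hjj; rewrite sn => Hjj.
    rewrite nth_cat size_tuple Hjj /Tn sn Es eqxx /=.
    by apply: set_nth_default; rewrite size_tuple.
  - case: ifP => [/andP [Hns /eqP Ew]|Hno].
    + move: Hjj; rewrite [s < n]ltnNge Hns /= => Hjj.
      rewrite nth_cat size_tuple (_ : (na + jj < na) = false); last by lia.
      rewrite addKn /Tn [s < n]ltnNge Hns /=.
      rewrite (nth_map 0%R); last by rewrite size_ws; lia.
      rewrite /f Ew eqxx; by apply: set_nth_default; rewrite size_tuple.
    + rewrite nth_default; last by rewrite size_cat !size_tuple; lia.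
      rewrite /p2 (_ : na + nb + z - (na + nb) = z); last by lia.
      rewrite E2; congr nth; rewrite /Tn; case: ltnP => Hsn /=.
      * by move/eqP/negbTE: Ns => ->.
      * rewrite [in RHS](nth_map 0%R); last by rewrite size_ws; lia.
        rewrite /f; case: eqP => // Ew; by rewrite Hsn Ew eqxx in Hno.
pose beta := R (u1 ks) wst.
pose psi := if pb (beta <-> truth t) then psi0 else Negf psi0.
have Hfree : forall k, ffree k psi -> ffree k psi0 by rewrite /psi; case: pb.
exists psi, p2; split.
  move=> k Hk /Hfree /ffree_ren [z [Hz Ek]]; move: Hk; rewrite Ek.
  have Hz' := Hth z Hz.
  have [Hs Hjj E2] := nth_Z a b (p 0) u1 ws Hz'.
  move: Hs Hjj E2; rewrite /rho2.
  set s := (locate _ z).1; set jj := (locate _ z).2 => Hs Hjj E2.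
  case: eqP => [Es|_].
  + move: Hjj; rewrite Es Hks => Hjj Hk; exfalso; lia.
  + case: ifP => [/andP [Hns _]|_].
    * move: Hjj; rewrite [s < n]ltnNge Hns /= => Hjj Hk; exfalso; lia.
    * move=> _; rewrite /p2 (_ : na + nb + z - (na + nb) = z); last by lia.
      rewrite E2 /Tn; case: (ltnP s n) => Hsn /=.
      -- left; move: Hjj; rewrite Hsn => Hjj; exists (u1 s), (Ordinal Hjj).
         by rewrite (tnth_nth (p 0)).
      -- right; move: Hjj; rewrite [s < n]ltnNge Hsn => Hjj.
         exists (nth 0%R ws (s - n)), (Ordinal Hjj); by rewrite (tnth_nth (p 0)).
exists (ks%:R)%R, (ks.+1%:R)%R, lo, hi.
exists [seq u1 s | s <- iota 0 n & (s != ks) && pb (R (u1 s) wst)],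
       [seq u1 s | s <- iota 0 n & (s != ks) && ~~ pb (R (u1 s) wst)].
exists [seq w <- ws | (w != wst) && pb (R (u1 ks) w)],
       [seq w <- ws | (w != wst) && ~~ pb (R (u1 ks) w)].
split; first by rewrite ltr_nat.
split; first by case/andP: Hlh => H1 H2; exact: lt_trans H1 H2.
split.
  move=> x /mapP [s1 Hs1 ->] /mapP [s2 Hs2 E12].
  move: Hs1 Hs2; rewrite !mem_filter => /andP [/andP [_ /pbP H1] _] /andP [/andP [_ /pbN H2] _].
  by apply: H2; rewrite -E12.
split.
  move=> y; rewrite !mem_filter => /andP [/andP [_ /pbP H1] _] /andP [/andP [_ /pbN H2] _].
  exact: H2 H1.
split.
  move=> x; rewrite mem_cat => /orP [] /mapP [s Hs ->]; move: Hs;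
  rewrite mem_filter mem_iota add0n /= => /andP [/andP [Ns _] Hs];
  exact: (slot_out S1).
split.
  move=> y; rewrite mem_cat !mem_filter => /orP [] /andP [/andP [/eqP Ny _] Hy] /andP [H1 H2];
  (case: (Hsep y Hy Ny) => H; [by rewrite leNgt H1 in H | by rewrite leNgt H2 in H]).
move=> u v Hu Hv HVB1 HVB2 HUA1 HUA2.
have HVB : forall w, w \in ws -> w <> wst -> (R u w <-> R (u1 ks) w).
  move=> w Hw Nw; case: (classic (R (u1 ks) w)) => H.
  - split => // _; apply: HVB1; rewrite mem_filter Hw andbT; apply/andP; split; [exact/eqP|exact/pbP].
  - split => // H'; exfalso; apply: (HVB2 w) H'; rewrite mem_filter Hw andbT.
    apply/andP; split; [exact/eqP|exact/pbN].
have HUA : forall s, s < n -> s <> ks -> (R (u1 s) v <-> R (u1 s) wst).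
  move=> s Hs Ns; case: (classic (R (u1 s) wst)) => H.
  - split => // _; apply: HUA1; apply: map_f; rewrite mem_filter mem_iota add0n Hs leq0n !andbT.
    apply/andP; split; [exact/eqP|exact/pbP].
  - split => // H'; exfalso; apply: (HUA2 (u1 s)) H'; apply: map_f.
    rewrite mem_filter mem_iota add0n Hs leq0n !andbT; apply/andP; split; [exact/eqP|exact/pbN].
pose u' := fun s => if s == ks then u else u1 s.
pose ws' := [seq f v w | w <- ws].
have Slot' : Slot n u'.
  by move=> s Hs; rewrite /u'; case: eqP => [->|_]; [exact: Hu | exact: S1].
have nws' : forall s, s < m -> nth 0%R ws' s = f v (nth 0%R ws s).
  by move=> s Hs; rewrite /ws' (nth_map 0%R) // size_ws.
have Hws' : forall s t', s < m -> t' < m ->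
    ((nth 0%R ws' s <= nth 0%R ws' t')%R <-> (nth 0%R ws s <= nth 0%R ws t')%R).
  move=> s t' Hs Ht'; rewrite !nws' //.
  by apply: (fsep_le Hlh Hv Hsep); apply: mem_nth; rewrite size_ws.
have Rcomp : forall X : nat -> rat,
    (forall s w, s < n -> w \in ws -> (s, w) <> (ks, wst) -> (R (u1 s) w <-> R (X s) w)) ->
    (R u v <-> R (X ks) wst) ->
    forall s t', s < n -> t' < m -> (R (u' s) (nth 0%R ws' t') <-> R (X s) (nth 0%R ws t')).
  move=> X HX Huv s t' Hs Ht'; rewrite nws' //.
  have Hw : nth 0%R ws t' \in ws by rewrite mem_nth ?size_ws.
  rewrite /u' /f; case: (eqVneq s ks) => [Es|Ns]; case: (eqVneq (nth 0%R ws t') wst) => [Ew|Nw].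
  - by rewrite Es Ew.
  - rewrite Es HVB //; last exact/eqP.
    by apply: HX => // /(congr1 snd) /= E'; move: Nw; rewrite E' eqxx.
  - rewrite HUA //; last exact/eqP.
    by rewrite -Ew; apply: HX => // /(congr1 fst) /= E'; move: Ns; rewrite E' eqxx.
  - by apply: HX => // /(congr1 fst) /= E'; move: Ns; rewrite E' eqxx.
have C1 : (R u v <-> beta) -> (sat (ext (tval (a u) ++ tval (b v)) p2) psi0 <-> truth t).
  move=> H; rewrite key // /truth; apply: (same_truth HL) => //.
  - exact: (ordU _ _ Slot' S1).
  - by apply: Rcomp.
have C2 : ~ (R u v <-> beta) -> (sat (ext (tval (a u) ++ tval (b v)) p2) psi0 <-> truth t.+1).
  move=> H; rewrite key // /truth; apply: (same_truth HL) => //.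
  - exact: (ordU _ _ Slot' S2).
  - apply: Rcomp; first exact: agree.
    move: H differ; rewrite /beta -/u1 -/u2.
    case: (classic (R u v)); case: (classic (R (u1 ks) wst)); case: (classic (R (u2 ks) wst)); tauto.
have [F1 F2] := final_logic Hdiff C1 C2.
rewrite /psi; case: (excluded_middle_informative (beta <-> truth t)) => Hb.
- have -> : pb (beta <-> truth t) = true by apply/pbP.
  exact: F1.
- have -> : pb (beta <-> truth t) = false by apply/negbTE/pbN.
  exact: F2.
Qed.
End Core.

Definition swp (x : point) : point := match x with inl q => inr q | inr q => inl q end.

Lemma random_obg_T R : random_obg R -> random_obg (fun x y => R y x).
Proof. by case=> h1 h2; split. Qed.

Lemma Lstar_T L (M : structure L) R na nb (a : rat -> na.-tuple M) (b : rat -> nb.-tuple M) :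
  Lstar_indisc R a b -> Lstar_indisc (fun x y => R y x) b a.
Proof.
move=> HL n t s Hq.
have E : forall t' : 'I_n -> point,
    concat_fam (fam_tuple b a) t' = concat_fam (fam_tuple a b) (fun k => swp (t' k)).
  by move=> t'; rewrite /concat_fam; congr flatten; apply: eq_map => k; case: (t' k).
rewrite !E; apply: HL => k l.
have [h1 [h2 [h3 h4]]] := Hq k l; have [_ [_ [_ h4']]] := Hq l k.
have isw : forall x, isU (swp x) <-> ~ isU x by case=> q /=; tauto.
have esw : forall x y, swp x = swp y <-> x = y.
  by move=> [x|x] [y|y] /=; split => // -[->].
have lsw : forall x y, le_pt (swp x) (swp y) <-> le_pt x y by move=> [x|x] [y|y].
have rsw : forall x y, R_pt R (swp x) (swp y) <-> R_pt (fun x y => R y x) y x by move=> [x|x] [y|y].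
split; first by rewrite !isw; tauto.
split; first by rewrite !esw.
split; first by rewrite !lsw.
by rewrite !rsw.
Qed.

Lemma config_swap L (M : structure L) R na nb (a : rat -> na.-tuple M) (b : rat -> nb.-tuple M) psi' p :
  Config (fun x y => R y x) b a psi' p -> exists psi, Config R a b psi p.
Proof.
move=> [Hpar [lu [hu [lv [hv [UA1 [UA2 [VB1 [VB2 [Hu [Hv [dUA [dVB [oUA [oVB Hc]]]]]]]]]]]]]]].
pose rs k := if k < nb then na + k else if k < nb + na then k - nb else k.
pose BB := fbound psi' + na + nb + 1.
have Hrs : forall k, ffree k psi' -> rs k < BB.
  move=> k /fbound_ok Hk; rewrite /rs /BB; case: ifP => _; [lia|case: ifP => _; lia].
exists (fren BB rs psi'); split.
  move=> k Hk /ffree_ren [z [Hz Ek]]; move: Hk; rewrite Ek /rs.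
  case: ifP => H1; first by lia.
  case: ifP => H2; first by lia.
  move=> Hz'; case: (Hpar z) => //; [lia|by right|by left].
exists lv, hv, lu, hu, VB1, VB2, UA1, UA2.
do 6 (split => //).
move=> u v Hu' Hv' H1 H2 H3 H4.
rewrite sat_ren0 //.
rewrite (@sat_eq L M psi' _ (ext (tval (b v) ++ tval (a u)) p)); first exact: Hc.
move=> k; rewrite /ext /rs; case: ifP => K1.
  rewrite nth_cat size_tuple (_ : (na + k < na) = false); last by lia.
  rewrite addKn nth_cat size_tuple K1.
  by apply: set_nth_default; rewrite size_tuple.
case: ifP => K2.
  rewrite nth_cat size_tuple (_ : (k - nb < na) = true); last by lia.
  rewrite nth_cat size_tuple K1.
  by apply: set_nth_default; rewrite size_tuple; lia.
by rewrite !nth_default // size_cat !size_tuple; lia.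
Qed.

Theorem lemma2 (L : language) (M : structure L) (R : rat -> rat -> Prop)
  (na nb : nat) (a : rat -> na.-tuple M) (b : rat -> nb.-tuple M) :
  random_obg R ->
  Lstar_indisc R a b ->
  mutually_indisc a b \/
  exists (phi : formula L) (p : nat -> M),
    (forall k, (na + nb <= k)%N -> ffree k phi ->
       params_of a (p k) \/ params_of b (p k)) /\
    has_IP na nb phi p.
Proof.
move=> HR HL.
case: (classic (mutually_indisc a b)) => H; [by left|right].
have [U _] := UFex.ufilter_exists.
have fin : forall psi p, Config R a b psi p -> exists (phi : formula L) (p : nat -> M),
    (forall k, (na + nb <= k)%N -> ffree k phi -> params_of a (p k) \/ params_of b (p k)) /\
    has_IP na nb phi p.
  move=> psi p Hc; exists psi, p; split; first by case: Hc.
  exact: (config_IP U HR Hc).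
case: (classic (indisc_over (params_of b) a)) => Ha.
- have Hb : ~ indisc_over (params_of a) b by move=> Hb; apply: H; split.
  have [psi' [p Hc]] := core (random_obg_T HR) (Lstar_T HL) Hb.
  have [psi Hc2] := config_swap Hc.
  exact: fin Hc2.
- have [psi [p Hc]] := core HR HL Ha.
  exact: fin Hc.
Qed.
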